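(* Let $P$ be a program and $\sigma\in C_{\mathrm{Power}}(P)$ a Power computation. Then a load $(t,i)$ reads its value from a store $(t,i')$ via an early-read transition if and only if (1) $\sigma=\sigma_1\cdot(\mathrm{load},t,i,a)\cdot\sigma_2\cdot(\mathrm{commit},t,i',k,a)\cdot\sigma_3$ for some $k$ and some $i'\in\{1,\dots,i-1\}$, and (2) $\sigma_3$ contains no event of the form $(\mathrm{commit},t,j,k',a)$ with $j\in\{i'+1,\dots,i-1\}$ and arbitrary $k'$.
   Context: Programs. Fix a finite set $D$ of values, which also serve as addresses, with $0\in D$, and a finite set $\mathit{Reg}$ of registers taking values in $D$. Expressions are built from constants in $D$, registers, and functions over $D\cup\{\bot\}$ that return $\bot$ iff some argument is $\bot$. Commands are loads $r\leftarrow \mathrm{mem}[e]$, stores $\mathrm{mem}[e]\leftarrow e'$, assignments $r\leftarrow e$, and $\mathrm{assume}(e)$. A thread is a finite automaton whose transitions (instructions) are labeled by commands; a program is a finite sequence of threads with ids $1,\dots,|P|$. $(t,i)$ denotes the $i$-th fetched instruction of thread $t$. Power semantics. A state consists of, for each thread $t$, a runtime state $(F,C,L)$ ($F$ the sequence of fetched instructions, $C$ the set of committed indices, $L$ mapping each index to $\bot$ or to the store read by the load there: an initial store $\mathrm{init}_a$ of value $0$ to $a$, or a pair $(t',i')$), and a storage state $(co,prop)$ ($co$ assigns rational coherence keys to committed stores, initial stores have key $0$; $prop(t,a)$ is the last store to $a$ propagated to $t$, initially $\mathrm{init}_a$). Register values for instruction $(t,i)$ come from the latest earlier fetched assignment or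 load to the register ($0$ if none; a load gives $\bot$ if unsatisfied, $0$ if it read an initial store, else the value of the store read); $\mathrm{addr}$ and $\mathrm{val}$ denote evaluated address/value arguments. Address/data dependencies are earlier instructions an address/value depends on via registers; control dependencies are earlier assumes. Transitions: (fetch) append an instruction of $T_t$ continuing from the last fetched one's target state, event $(\mathrm{fetch},t,\text{instr})$; (load from memory) load $i$ with $L[i]=\bot$ and address $a\ne\bot$: $L[i]:=prop(t,a)$, event $(\mathrm{load},t,i,a)$; (early read) same event, if the greatest $i'<i$ that is a store with address in $\{a,\bot\}$ has address $a$, value $\ne\bot$ and is uncommitted: $L[i]:=(t,i')$; (commit) uncommitted $i$ with committed address/data/control dependencies, address and value $\ne\bot$, all earlier instructions with the same or unknown address committed, $L[i]\ne\bot$ for loads, value $\ne0$ for assumes: event $(\mathrm{commit},t,i)$; for a store additionally a fresh key $k$ is set as $co(t,i)$, event $(\mathrm{commit},t,i,k,a)$, immediately followed by propagation to $t$; (propagate) committed store $(t',i')$ to $a$ with $co(prop(t,a))<co(t',i')$: $prop(t,a):=(t',i')$, event $(\mathrm{prop},t,t',i',a)$. Final states: all fetched instructions committed; for loads $i'<i$ of a thread to the same address, $co(L[i'])\le co(L[i])$; for a store $i'$ and later load $i$ of a thread to the same address, $co(t,i')\le co(L[i])$. $C_{\mathrm{Power}}(P)$ is the set of event sequences leading from the initial state (nothing fetched) to a final state. *)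

(* Defs.v *)
(* Power operational semantics (Derevenetc--Meyer style). *)
From mathcomp Require Import all_boot all_order all_algebra.
From Stdlib Require List.

Set Implicit Arguments.
Unset Strict Implicit.
Unset Printing Implicit Defensive.

Section Power.

Variables (D : finType) (zero : D) (Reg : finType).

(* A strict function (returning ⊥ iff some argument is ⊥) is determined by
   its restriction to D, given here as [f : seq D -> D] applied to the list
   of argument values. *)
Inductive expr : Type :=
| EConst of D
| EReg of Reg
| EFun of (seq D -> D) & seq expr.

Inductive cmd : Type :=
| CLoad of Reg & expr
| CStore of expr & expr        (* mem[e] <- e'     *)
| CAssign of Reg & expr
| CAssume of expr.

(* An instruction = a transition (source control state, command, target). *)
Record instr : Type := Instr { isrc : nat; icmd : cmd; itgt : nat }.

Record thread : Type := Thread { tinit : nat; ttrans : seq instr }.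

(* A program: a finite sequence of threads, with ids 1..|P|. *)
Definition program := seq thread.

Definition thread_of (P : program) (t : nat) : thread :=
  nth (Thread 0 [::]) P t.-1.

Definition valid_tid (P : program) (t : nat) : bool := (0 < t <= size P).

(* Stores that a load can read: the initial store init_a, or (t', i'). *)
Inductive src : Type := Init of D | St of nat & nat.

(* States: for each thread t the runtime state (F t, C t, L t), and the
   storage state (co, prop). Instruction indices are 1-based. *)
Record state : Type := State {
  sF : nat -> seq instr;                (* fetched instructions          *)
  sC : nat -> nat -> bool;              (* committed indices             *)
  sL : nat -> nat -> option src;        (* store read by a load (None=⊥) *)
  sco : nat -> nat -> option rat;       (* coherence key of committed stores *)
  sprop : nat -> D -> src               (* last store to a propagated to t *)
}.

Definition init_state : state :=
  State (fun _ => [::]) (fun _ _ => false) (fun _ _ => None)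
        (fun _ _ => None) (fun _ a => Init a).

Definition cmd_at (s : state) (t i : nat) : option cmd :=
  if i == 0 then None else omap icmd (onth (sF s t) i.-1).

Definition fetched (s : state) (t i : nat) : bool := 0 < i <= size (sF s t).

Definition writes (r : Reg) (oc : option cmd) : bool :=
  match oc with
  | Some (CLoad r' _) | Some (CAssign r' _) => r' == r
  | _ => false
  end.

Definition is_assume (oc : option cmd) : bool :=
  if oc is Some (CAssume _) then true else false.

Definition last_writer (s : state) (t i : nat) (r : Reg) (j : nat) : Prop :=
  [/\ 0 < j < i, writes r (cmd_at s t j) &
      forall j', j < j' < i -> ~~ writes r (cmd_at s t j')].

(* Register and expression values (None = ⊥), as seen by instruction (t,i). *)
Inductive regv (s : state) : nat -> nat -> Reg -> option D -> Prop :=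
| regv_none t i r :
    (forall j, 0 < j < i -> ~~ writes r (cmd_at s t j)) ->
    regv s t i r (Some zero)
| regv_assign t i r j e v :
    last_writer s t i r j -> cmd_at s t j = Some (CAssign r e) ->
    exprv s t j e v -> regv s t i r v
| regv_load_unsat t i r j e :
    last_writer s t i r j -> cmd_at s t j = Some (CLoad r e) ->
    sL s t j = None -> regv s t i r None
| regv_load_init t i r j e a :
    last_writer s t i r j -> cmd_at s t j = Some (CLoad r e) ->
    sL s t j = Some (Init a) -> regv s t i r (Some zero)
| regv_load_st t i r j e t' i' ea ev v :
    last_writer s t i r j -> cmd_at s t j = Some (CLoad r e) ->
    sL s t j = Some (St t' i') -> cmd_at s t' i' = Some (CStore ea ev) ->
    exprv s t' i' ev v -> regv s t i r v
with exprv (s : state) : nat -> nat -> expr -> option D -> Prop :=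
| exprv_const t i d : exprv s t i (EConst d) (Some d)
| exprv_reg t i r v : regv s t i r v -> exprv s t i (EReg r) v
| exprv_fun t i f es vs :
    exprsv s t i es vs ->
    exprv s t i (EFun f es)
      (if all (fun o : option D => o) vs then Some (f (pmap id vs)) else None)
with exprsv (s : state) : nat -> nat -> seq expr -> seq (option D) -> Prop :=
| exprsv_nil t i : exprsv s t i [::] [::]
| exprsv_cons t i e es v vs :
    exprv s t i e v -> exprsv s t i es vs -> exprsv s t i (e :: es) (v :: vs).

Definition addr (s : state) (t i : nat) (a : option D) : Prop :=
  match cmd_at s t i with
  | Some (CLoad _ e) | Some (CStore e _) => exprv s t i e a
  | _ => False
  end.

Definition storeval (s : state) (t i : nat) (v : option D) : Prop :=
  match cmd_at s t i with
  | Some (CStore _ e) => exprv s t i e v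
  | _ => False
  end.

Definition is_store (oc : option cmd) : bool :=
  if oc is Some (CStore _ _) then true else false.
Definition is_load (oc : option cmd) : bool :=
  if oc is Some (CLoad _ _) then true else false.

Fixpoint regs_of (e : expr) : seq Reg :=
  match e with
  | EConst _ => [::]
  | EReg r => [:: r]
  | EFun _ es => flatten (map regs_of es)
  end.

Definition deps_committed (s : state) (t i : nat) (e : expr) : Prop :=
  forall r j, r \in regs_of e -> last_writer s t i r j -> sC s t j.

Definition earlier_same_addr_committed (s : state) (t i : nat) (a : D) : Prop :=
  forall j, 0 < j < i -> (addr s t j None \/ addr s t j (Some a)) -> sC s t j.

Definition ctrl_committed (s : state) (t i : nat) : Prop :=
  forall j, 0 < j < i -> is_assume (cmd_at s t j) -> sC s t j.

Definition can_commit (s : state) (t i : nat) : Prop :=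
  [/\ fetched s t i, ~~ sC s t i, ctrl_committed s t i &
  match cmd_at s t i with
  | Some (CLoad _ e) =>
      deps_committed s t i e /\
      exists a, [/\ exprv s t i e (Some a), earlier_same_addr_committed s t i a
                  & sL s t i <> None]
  | Some (CStore e e') =>
      deps_committed s t i e /\ deps_committed s t i e' /\
      exists a v, [/\ exprv s t i e (Some a), exprv s t i e' (Some v)
                    & earlier_same_addr_committed s t i a]
  | Some (CAssign _ e) =>
      deps_committed s t i e /\ exists v, exprv s t i e (Some v)
  | Some (CAssume e) =>
      deps_committed s t i e /\ exists v, exprv s t i e (Some v) /\ v != zero
  | None => False
  end].

Definition co_of (s : state) (x : src) : rat :=
  match x with Init _ => 0%R | St t i => odflt 0%R (sco s t i) end.

Definition upd1 {T : Type} (f : nat -> T) (t : nat) (x : T) : nat -> T :=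
  fun t' => if t' == t then x else f t'.
Definition upd2 {T : Type} (f : nat -> nat -> T) (t i : nat) (x : T) :=
  fun t' i' => if (t' == t) && (i' == i) then x else f t' i'.
Definition updP (f : nat -> D -> src) (t : nat) (a : D) (x : src) :=
  fun t' a' => if (t' == t) && (a' == a) then x else f t' a'.

Definition set_F s F := State F (sC s) (sL s) (sco s) (sprop s).
Definition set_C s C := State (sF s) C (sL s) (sco s) (sprop s).
Definition set_L s L := State (sF s) (sC s) L (sco s) (sprop s).
Definition set_co s co := State (sF s) (sC s) (sL s) co (sprop s).
Definition set_prop s pr := State (sF s) (sC s) (sL s) (sco s) pr.

Inductive event : Type :=
| EvFetch of nat & instr
| EvLoad of nat & nat & D
| EvCommit of nat & nat
| EvCommitSt of nat & nat & rat & D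
| EvProp of nat & nat & nat & D.

(* Transitions, recording which rule was used. *)
Inductive trans : Type :=
| TFetch of nat & instr
| TLoadMem of nat & nat & D
| TEarly of nat & nat & nat & D       (* TEarly t i i' a : early read L[i] := (t,i') *)
| TCommit of nat & nat
| TCommitSt of nat & nat & rat & D
| TProp of nat & nat & nat & D.

Definition events_of (tr : trans) : seq event :=
  match tr with
  | TFetch t ins => [:: EvFetch t ins]
  | TLoadMem t i a => [:: EvLoad t i a]
  | TEarly t i _ a => [:: EvLoad t i a]
  | TCommit t i => [:: EvCommit t i]
  | TCommitSt t i k a => [:: EvCommitSt t i k a; EvProp t t i a]
  | TProp t t' i' a => [:: EvProp t t' i' a]
  end.

Definition last_target (P : program) (s : state) (t : nat) : nat :=
  if sF s t is [::] then tinit (thread_of P t)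
  else itgt (last (Instr 0 (CAssume (EConst zero)) 0) (sF s t)).

Inductive step (P : program) : state -> trans -> state -> Prop :=
| st_fetch s t ins :
    valid_tid P t -> List.In ins (ttrans (thread_of P t)) ->
    isrc ins = last_target P s t ->
    step P s (TFetch t ins) (set_F s (upd1 (sF s) t (rcons (sF s t) ins)))
| st_loadmem s t i a :
    is_load (cmd_at s t i) -> sL s t i = None -> addr s t i (Some a) ->
    step P s (TLoadMem t i a) (set_L s (upd2 (sL s) t i (Some (sprop s t a))))
| st_early s t i i' a v :
    is_load (cmd_at s t i) -> sL s t i = None -> addr s t i (Some a) ->
    0 < i' < i -> is_store (cmd_at s t i') -> addr s t i' (Some a) ->
    (forall j, i' < j < i -> is_store (cmd_at s t j) ->
       ~ (addr s t j None \/ addr s t j (Some a))) ->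
    storeval s t i' (Some v) -> ~~ sC s t i' ->
    step P s (TEarly t i i' a) (set_L s (upd2 (sL s) t i (Some (St t i'))))
| st_commit s t i :
    ~~ is_store (cmd_at s t i) -> can_commit s t i ->
    step P s (TCommit t i) (set_C s (upd2 (sC s) t i true))
| st_commitst s t i k a :
    is_store (cmd_at s t i) -> can_commit s t i -> addr s t i (Some a) ->
    k != 0%R -> (forall t' i', sco s t' i' <> Some k) ->
    (* the immediately following propagation to t *)
    (co_of s (sprop s t a) < k)%R ->
    step P s (TCommitSt t i k a)
      (set_prop (set_co (set_C s (upd2 (sC s) t i true)) (upd2 (sco s) t i (Some k)))
                (updP (sprop s) t a (St t i)))
| st_prop s t t' i' a k :
    valid_tid P t -> sco s t' i' = Some k -> addr s t' i' (Some a) ->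
    (co_of s (sprop s t a) < k)%R ->
    step P s (TProp t t' i' a) (set_prop s (updP (sprop s) t a (St t' i'))).

Inductive run (P : program) : state -> seq trans -> state -> Prop :=
| run_nil s : run P s [::] s
| run_cons s tr s' trs s'' :
    step P s tr s' -> run P s' trs s'' -> run P s (tr :: trs) s''.

Definition final (s : state) : Prop :=
  [/\ (forall t i, fetched s t i -> sC s t i),
      (forall t i' i a x' x, 0 < i' < i ->
         is_load (cmd_at s t i') -> is_load (cmd_at s t i) ->
         addr s t i' (Some a) -> addr s t i (Some a) ->
         sL s t i' = Some x' -> sL s t i = Some x -> (co_of s x' <= co_of s x)%R) &
      (forall t i' i a k x, i' < i ->
         is_store (cmd_at s t i') -> is_load (cmd_at s t i) ->
         addr s t i' (Some a) -> addr s t i (Some a) ->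
         sco s t i' = Some k -> sL s t i = Some x -> (k <= co_of s x)%R)].

Definition run_events (trs : seq trans) : seq event := flatten (map events_of trs).

Definition C_Power (P : program) (sigma : seq event) : Prop :=
  exists trs sf, [/\ run P init_state trs sf, final sf & sigma = run_events trs].

End Power.

(* Main.v *)
Require Import Defs.
From mathcomp Require Import all_boot all_order all_algebra zify.
From Stdlib Require List.
Set Implicit Arguments. Unset Strict Implicit. Unset Printing Implicit Defensive.
Import Order.TTheory GRing.Theory Num.Theory.


Scheme regv_mind := Induction for regv Sort Prop
 with exprv_mind := Induction for exprv Sort Prop
 with exprsv_mind := Induction for exprsv Sort Prop.

Section Aux.
Variables (D : finType) (zero : D) (Reg : finType).
Local Notation state := (state D Reg).

Lemma onth_size T (l : seq T) n x : onth l n = Some x -> n < size l.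
Proof. by elim: l n => [|y l IH] [|n] //= /IH. Qed.

Lemma onth_rcons T (l : seq T) y n : n < size l -> onth (rcons l y) n = onth l n.
Proof. by elim: l n => [|z l IH] [|n] //= /IH. Qed.

Lemma cmd_at_size (s : state) t i c : cmd_at s t i = Some c -> 0 < i <= size (sF s t).
Proof.
rewrite /cmd_at; case: i => [|i] //=.
by case E: (onth _ _) => [x|] //= _; have := onth_size E.
Qed.

Definition ext (s s' : state) :=
  (forall t i, i <= size (sF s t) -> i <= size (sF s' t) /\ cmd_at s' t i = cmd_at s t i) /\
  (forall t j x, sL s t j = Some x -> sL s' t j = Some x).

Lemma ext_refl s : ext s s.
Proof. by split. Qed.

Lemma ext_trans s1 s2 s3 : ext s1 s2 -> ext s2 s3 -> ext s1 s3.
Proof.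
move=> [A1 B1] [A2 B2]; split; last by move=> t j x /B1 /B2.
move=> t i H; have [H1 E1] := A1 _ _ H; have [H2 E2] := A2 _ _ H1.
by rewrite E2 E1.
Qed.

Lemma ext_cmd s s' t i c : ext s s' -> cmd_at s t i = Some c -> cmd_at s' t i = Some c.
Proof.
move=> [A _] E; have /andP[_ H] := cmd_at_size E.
by have [_ ->] := A _ _ H.
Qed.

Lemma ext_lw s s' t i r j : ext s s' -> i <= size (sF s t) ->
  last_writer s t i r j -> last_writer s' t i r j.
Proof.
move=> [A _] Hi [/andP[H0 Hj] Hw Hn].
have E k : k < i -> cmd_at s' t k = cmd_at s t k.
  by move=> Hk; have [_ ->] := A t k (leq_trans (ltnW Hk) Hi).
split; first by rewrite H0.
  by rewrite E.
move=> j' /andP[a b]; rewrite E //; apply: Hn; by rewrite a.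
Qed.

Lemma ext_exprv s s' : ext s s' -> forall t i e v,
  exprv zero s t i e v -> v <> None -> i <= size (sF s t) -> exprv zero s' t i e v.
Proof.
move=> X; have [A B] := X.
apply: (@exprv_mind D zero Reg s
  (fun t i r v _ => v <> None -> i <= size (sF s t) -> regv zero s' t i r v)
  (fun t i e v _ => v <> None -> i <= size (sF s t) -> exprv zero s' t i e v)
  (fun t i es vs _ => all (fun o : option D => o) vs -> i <= size (sF s t) -> exprsv zero s' t i es vs)).
- move=> t i r Hn _ Hi; apply: regv_none => j Hj.
  have [_ ->] := A t j (leq_trans (ltnW (proj2 (andP Hj))) Hi); exact: Hn.
- move=> t i r j e v Hl Hc He IH Hv Hi.
  have Hj : j <= size (sF s t) by have [/andP[_ ?] ? _] := Hl; exact: leq_trans (ltnW _) Hi.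
  apply: regv_assign (ext_lw X Hi Hl) (ext_cmd X Hc) (IH Hv Hj).
- by [].
- move=> t i r j e a Hl Hc HL _ Hi.
  exact: regv_load_init (ext_lw X Hi Hl) (ext_cmd X Hc) (B _ _ _ HL).
- move=> t i r j e t' i' ea ev v Hl Hc HL Hc' He IH Hv Hi.
  have /andP[_ Hi'] := cmd_at_size Hc'.
  exact: regv_load_st (ext_lw X Hi Hl) (ext_cmd X Hc) (B _ _ _ HL) (ext_cmd X Hc') (IH Hv Hi').
- move=> *; exact: exprv_const.
- move=> t i r v Hr IH Hv Hi; exact: exprv_reg (IH Hv Hi).
- move=> t i f es vs Hs IH Hv Hi; apply: exprv_fun; apply: IH => //.
  by move: Hv; case: all.
- move=> *; exact: exprsv_nil.
- move=> t i e es v vs He IH1 Hs IH2 /= /andP[a b] Hi.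
  apply: exprsv_cons; last exact: IH2.
  by apply: IH1 => // E; rewrite E in a.
Qed.

End Aux.


Section Aux2.
Variables (D : finType) (zero : D) (Reg : finType).
Local Notation state := (state D Reg).

Lemma lw_uniq (s : state) t i r j1 j2 :
  last_writer s t i r j1 -> last_writer s t i r j2 -> j1 = j2.
Proof.
move=> [/andP[_ H1] W1 N1] [/andP[_ H2] W2 N2].
case: (ltngtP j1 j2) => // L.
- by move: (N1 j2); rewrite L H2 W2 => /(_ isT).
- by move: (N2 j1); rewrite L H1 W1 => /(_ isT).
Qed.

Lemma lw_none (s : state) t i r j :
  (forall j, 0 < j < i -> ~~ writes r (cmd_at s t j)) -> last_writer s t i r j -> False.
Proof. by move=> N [H W _]; move: (N j H); rewrite W. Qed.

Ltac solve_lw :=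
  first [ by exfalso; apply: lw_none; eassumption
  | match goal with
  | L1 : last_writer ?s ?t ?i ?r ?j1, L2 : last_writer ?s ?t ?i ?r ?j2 |- _ =>
      have E := lw_uniq L1 L2; subst j2; clear L2
  end].

Lemma exprv_fun_uniq (s : state) t i e v :
  exprv zero s t i e v -> forall v', exprv zero s t i e v' -> v = v'.
Proof.
move: t i e v.
apply: (@exprv_mind D zero Reg s
  (fun t i r v _ => forall v', regv zero s t i r v' -> v = v')
  (fun t i e v _ => forall v', exprv zero s t i e v' -> v = v')
  (fun t i es vs _ => forall vs', exprsv zero s t i es vs' -> vs = vs')).
- move=> t i r N v' H; inversion H; subst => //; solve_lw.
- move=> t i r j e v Hl Hc He IH v' H; inversion H; subst; try solve_lw;
    rewrite Hc in H1; try discriminate; case: H1 => ?; subst; exact: IH.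
- move=> t i r j e Hl Hc HL v' H; inversion H; subst; try solve_lw;
    rewrite Hc in H1; try discriminate; congruence.
- move=> t i r j e a Hl Hc HL v' H; inversion H; subst; try solve_lw;
    rewrite Hc in H1; try discriminate; congruence.
- move=> t i r j e t' i' ea ev v Hl Hc HL Hc' He IH v' H; inversion H; subst; try solve_lw;
    rewrite Hc in H1; try discriminate; try congruence.
  rewrite HL in H2; case: H2 => ??; subst. rewrite Hc' in H3; case: H3 => ??; subst.
  exact: IH.
- by move=> t i d v' H; inversion H.
- move=> t i r v Hr IH v' H; inversion H; subst; exact: IH.
- move=> t i f es vs Hs IH v' H; inversion H; subst.
  match goal with K : exprsv _ _ _ _ _ _ |- _ => by rewrite (IH _ K) end.
- by move=> t i vs' H; inversion H.
- move=> t i e es v vs He IH1 Hs IH2 vs' H; inversion H; subst.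
  match goal with K : exprsv _ _ _ _ _ _, K2 : exprv _ _ _ _ _ _ |- _ => by rewrite (IH1 _ K2) (IH2 _ K) end.
Qed.

End Aux2.


Section Aux3.
Variables (D : finType) (zero : D) (Reg : finType).
Local Notation state := (state D Reg).
Local Notation expr := (expr D Reg).

Fixpoint expr_ind2 (Pe : expr -> Prop) (Ps : seq expr -> Prop)
  (hc : forall d, Pe (EConst Reg d)) (hr : forall r, Pe (EReg D r))
  (hf : forall f es, Ps es -> Pe (EFun f es))
  (hn : Ps [::]) (hcons : forall e es, Pe e -> Ps es -> Ps (e :: es)) (e : expr) : Pe e :=
  match e with
  | EConst d => hc d
  | EReg r => hr r
  | EFun f es => hf f es ((fix go (es : seq expr) : Ps es :=
       match es with [::] => hn | e :: es => hcons e es (expr_ind2 hc hr hf hn hcons e) (go es) end) es)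
  end.

Definition good (s : state) t i := exists ea ev v,
  cmd_at s t i = Some (CStore ea ev) /\ exprv zero s t i ev (Some v).

Lemma lw_dec (s : state) t r n :
  (forall j, 0 < j < n -> ~~ writes r (cmd_at s t j)) \/ exists j, last_writer s t n r j.
Proof.
elim: n => [|n [N|[j [H W N]]]].
- by left => j /andP[_]; rewrite ltn0.
- case W: (writes r (cmd_at s t n)); last first.
    left => j /andP[a b]; rewrite ltnS leq_eqVlt in b; case/orP: b => [/eqP->|b]; first by rewrite W.
    by apply: N; rewrite a b.
  case: n W N => [|n] W N.
    by left => j /andP[a b]; move: a; rewrite ltnS leqn0 in b; rewrite (eqP b).
  right; exists n.+1; split; [by rewrite /= ltnSn | by [] | move=> j' /andP[a b]; by move: (leq_trans a b); rewrite ltnn].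
- case Wn: (writes r (cmd_at s t n)) => //.
  + case: n Wn H W N => [|n] Wn H W N; first by move: H; case/andP => _; rewrite ltn0.
    right; exists n.+1; split; [by rewrite /= ltnSn | by [] | move=> j' /andP[a b]; by move: (leq_trans a b); rewrite ltnn].
  + right; exists j; split.
    * by case/andP: H => a b; rewrite a ltnW.
    * done.
    * move=> j' /andP[a b]; rewrite ltnS leq_eqVlt in b; case/orP: b => [/eqP->|b]; first by rewrite Wn.
      by apply: N; rewrite a b.
Qed.

Lemma exprv_total (s : state) :
  (forall t j t' i', sL s t j = Some (St D t' i') -> good s t' i') ->
  forall t i e, exists v, exprv zero s t i e v.
Proof.
move=> I1 t i; elim/ltn_ind: i => i IHi.
have Hr r : exists v, regv zero s t i r v.
  case: (lw_dec s t r i) => [N|[j L]].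
    by exists (Some zero); apply: regv_none.
  have Lj := L; case: Lj => [/andP[_ ji] W _].
  case Ec: (cmd_at s t j) W => [[r' e|ea ev|r' e|e]|] //= /eqP Er; subst r'.
  + case EL: (sL s t j) => [[a|t' i']|].
    * by exists (Some zero); exact: regv_load_init L Ec EL.
    * have [ea [ev [v [Ec' Hv]]]] := I1 _ _ _ _ EL.
      by exists (Some v); exact: regv_load_st L Ec EL Ec' Hv.
    * by exists None; exact: regv_load_unsat L Ec EL.
  + have [v Hv] := IHi j ji e; exists v; exact: regv_assign L Ec Hv.
apply: (@expr_ind2 (fun e => exists v, exprv zero s t i e v) (fun es => exists vs, exprsv zero s t i es vs)).
- by move=> d; eexists; apply: exprv_const.
- by move=> r; have [v Hv] := Hr r; exists v; apply: exprv_reg.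
- by move=> f es [vs Hvs]; eexists; apply: exprv_fun Hvs.
- by eexists; apply: exprsv_nil.
- by move=> e es [v Hv] [vs Hvs]; eexists; apply: exprsv_cons Hv Hvs.
Qed.

End Aux3.


Section Aux4.
Variables (D : finType) (zero : D) (Reg : finType) (P : program D Reg).
Local Notation state := (state D Reg).
Local Notation step := (step zero P).
Local Notation good := (@good D zero Reg).

Definition Inv (s : state) :=
 [/\ (forall t j t' i', sL s t j = Some (St D t' i') -> good s t' i'),
     (forall t a t' i', sprop s t a = St D t' i' -> sco s t' i' <> None) &
     (forall t i, sco s t i <> None -> good s t i /\ sC s t i)].

Lemma Inv_init : Inv (init_state D Reg).
Proof. by split. Qed.

Lemma step_ext s tr s' : step s tr s' -> ext s s'.
Proof.
case=> {s tr s'}; try by (move=> *; split).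
- move=> s t ins _ _ _; split; last by []. move=> t' i Hi /=.
  rewrite /cmd_at /= /upd1; case: eqP => [E|_]; last by []. subst t'.
  rewrite size_rcons (leq_trans Hi (leqnSn _)); split => //.
  case: i Hi => [|i] Hi //=.
  by rewrite onth_rcons.
- move=> s t i a _ HN _; split => //. move=> t' j x /=; rewrite /upd2.
  by case: andP => // [[/eqP-> /eqP->]]; rewrite HN.
- move=> s t i i' a v _ HN *; split => //. move=> t' j x /=; rewrite /upd2.
  by case: andP => // [[/eqP-> /eqP->]]; rewrite HN.
Qed.

Lemma good_ext s s' t i : ext s s' -> good s t i -> good s' t i.
Proof.
move=> X [ea [ev [v [Hc Hv]]]]; exists ea, ev, v; split; first exact: ext_cmd X Hc.
apply: ext_exprv X _ _ _ _ Hv _ _ => //; by case/andP: (cmd_at_size Hc).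
Qed.

Lemma step_sC s tr s' t i : step s tr s' -> sC s t i -> sC s' t i.
Proof.
case=> {s tr s'} //= s t0 i0 *; rewrite /upd2; by case: andP.
Qed.

Lemma can_commit_nC (s : state) t i : can_commit zero s t i -> ~~ sC s t i.
Proof. by case. Qed.

Lemma Inv_sco_None s t i : Inv s -> ~~ sC s t i -> sco s t i = None.
Proof.
move=> [_ _ I3] H; case E: (sco s t i) => [k|] //.
by have [_ C] := I3 t i (ltac:(by rewrite E)); rewrite C in H.
Qed.

Lemma step_sco s tr s' t i k : Inv s -> step s tr s' -> sco s t i = Some k -> sco s' t i = Some k.
Proof.
move=> I S; case: S I => {s' tr} //= s0 t0 i0 k0 a0 _ /can_commit_nC HC _ _ _ _ I H.
rewrite /upd2; case: andP => // [[/eqP E1 /eqP E2]]; subst.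
by rewrite (Inv_sco_None I HC) in H.
Qed.

Definition src_ok (s : state) (x : src D) :=
  match x with Init _ => True | St t i => sco s t i <> None end.

Lemma step_co_of s tr s' x : Inv s -> step s tr s' -> src_ok s x -> co_of s' x = co_of s x.
Proof.
move=> I S; case: x => //= t i; case E: (sco s t i) => [k|] // _.
by rewrite (step_sco I S E).
Qed.

Lemma step_src_ok s tr s' x : Inv s -> step s tr s' -> src_ok s x -> src_ok s' x.
Proof.
move=> I S; case: x => //= t i; case E: (sco s t i) => [k|] // _.
by rewrite (step_sco I S E).
Qed.

Lemma Inv_prop_ok s t a : Inv s -> src_ok s (sprop s t a).
Proof. move=> [_ I2 _]; case E: (sprop s t a) => //=; exact: I2 E. Qed.

Lemma step_Inv s tr s' : Inv s -> step s tr s' -> Inv s'.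
Proof.
move=> I S; have X := step_ext S; case: S X I => {tr s'}.
- move=> s0 t ins _ _ _ X I; have [I1 I2 I3] := I; split => /=.
  + by move=> t' j t2 i2 /I1; apply: good_ext X.
  + exact: I2.
  + by move=> t' j /I3 [G C]; split => //; exact: good_ext X G.
- move=> s0 t i a _ _ _ X I; have [I1 I2 I3] := I; split => /=.
  + move=> t' j t2 i2; rewrite /upd2; case: andP => [_ [E]|_ /I1]; last exact: good_ext X.
    apply: good_ext X _; move: (Inv_prop_ok t a I); rewrite E /=.
    by move=> /(I3 _ _) [].
  + exact: I2.
  + by move=> t' j /I3 [G C]; split => //; exact: good_ext X G.
- move=> s0 t i i' a v _ _ _ _ Hst _ _ Hv _ X I; have [I1 I2 I3] := I; split => /=.
  + move=> t' j t2 i2; rewrite /upd2; case: andP => [_ [<- <-]|_ /I1]; last exact: good_ext X.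
    apply: good_ext X _; move: Hst Hv; rewrite /storeval /is_store.
    case E: (cmd_at s0 t i') => [[r e|ea ev|r e|e]|] // _ Hv; by exists ea, ev, v; split.
  + exact: I2.
  + by move=> t' j /I3 [G C]; split => //; exact: good_ext X G.
- move=> s0 t i _ _ X I; have [I1 I2 I3] := I; split => /=.
  + by move=> t' j t2 i2 /I1; apply: good_ext X.
  + exact: I2.
  move=> t' j H; have [G C] := I3 _ _ H; split; first exact: good_ext X G.
  by rewrite /upd2 C; case: andP.
- move=> s0 t i k a Hst [_ _ _ Hcc] _ _ _ _ X I; have [I1 I2 I3] := I; split => /= [t' j t2 i2 /I1|t' a' t2 i2|t' j].
  + exact: good_ext X.
  + rewrite /updP /upd2; case: andP => [_ [<- <-]|_]; first by rewrite !eqxx.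
    move/I2; by case: andP.
  + rewrite /upd2; case: andP => [[/eqP -> /eqP ->] _|_ H].
    * split => //; apply: good_ext X _; move: Hst Hcc; rewrite /is_store.
      case E: (cmd_at s0 t i) => [[r e|ea ev|r e|e]|] // _ [_ [_ [a0 [v [_ Hv _]]]]]; by exists ea, ev, v; split.
    * have [G C] := I3 _ _ H; split => //; exact: good_ext X G.
- move=> s0 t t' i' a k _ Hk _ _ X I; have [I1 I2 I3] := I; split => /= [t0 j t2 i2 /I1|t0 a' t2 i2|t0 j H].
  + exact: good_ext X.
  + rewrite /updP; case: andP => [_ [<- <-]|_ /I2 //]; by rewrite Hk.
  + have [G C] := I3 _ _ H; split => //; exact: good_ext X G.
Qed.

Lemma step_prop_mono s tr s' t a : Inv s -> step s tr s' ->
  (co_of s (sprop s t a) <= co_of s' (sprop s' t a))%R.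
Proof.
move=> I S; have E := step_co_of I S (Inv_prop_ok t a I).
case: S E I => {tr s'}; try by (move=> *; match goal with E : co_of _ _ = _ |- _ => rewrite /= E end).
- move=> s0 t0 i0 k a0 _ /can_commit_nC HC _ _ _ Hlt E I /=.
  rewrite /updP; case: andP => [[/eqP E1 /eqP E2]|_]; last by rewrite E.
  subst; apply/ltW; apply: (lt_le_trans Hlt); by rewrite /co_of /= /upd2 !eqxx.
- move=> s0 t0 t' i' a0 k _ Hk _ Hlt E I /=.
  rewrite /updP; case: andP => [[/eqP E1 /eqP E2]|_]; last by rewrite E.
  subst; apply/ltW; apply: (lt_le_trans Hlt); by rewrite /co_of /= Hk.
Qed.

End Aux4.


Section Aux5.
Variables (D : finType) (zero : D) (Reg : finType) (P : program D Reg).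
Local Notation state := (state D Reg).
Local Notation step := (step zero P).
Local Notation run := (run zero P).
Local Notation Inv := (@Inv D zero Reg).

Lemma run_Inv s l s' : Inv s -> run s l s' -> Inv s'.
Proof. move=> I R; elim: R I => // s0 tr s1 l0 s2 S _ IH I; exact: IH (step_Inv I S). Qed.

Lemma run_ext s l s' : run s l s' -> ext s s'.
Proof.
elim=> [s0|s0 tr s1 l0 s2 S _ IH]; first exact: ext_refl.
exact: ext_trans (step_ext S) IH.
Qed.

Lemma run_sC s l s' t i : run s l s' -> sC s t i -> sC s' t i.
Proof. elim=> // s0 tr s1 l0 s2 S _ IH H; exact: IH (step_sC S H). Qed.

Lemma run_sco s l s' t i k : Inv s -> run s l s' -> sco s t i = Some k -> sco s' t i = Some k.
Proof.
move=> I R; elim: R I => // s0 tr s1 l0 s2 S R IH I H.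
exact: IH (step_Inv I S) (step_sco I S H).
Qed.

Lemma run_co_of s l s' x : Inv s -> run s l s' -> src_ok s x -> co_of s' x = co_of s x.
Proof.
move=> I R; elim: R I => // s0 tr s1 l0 s2 S R IH I H.
by rewrite (IH (step_Inv I S) (step_src_ok I S H)) (step_co_of I S H).
Qed.

Lemma run_prop_mono s l s' t a : Inv s -> run s l s' ->
  (co_of s (sprop s t a) <= co_of s' (sprop s' t a))%R.
Proof.
move=> I R; elim: R I => // s0 tr s1 l0 s2 S R IH I.
exact: le_trans (step_prop_mono t a I S) (IH (step_Inv I S)).
Qed.

Lemma run_app s l1 l2 s' : run s (l1 ++ l2) s' -> exists s1, run s l1 s1 /\ run s1 l2 s'.
Proof.
elim: l1 s => [|tr l1 IH] s /=; first by exists s; split => //; constructor.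
move=> H; inversion H; subst.
have [s2 [R1 R2]] := IH _ H5; exists s2; split => //; exact: run_cons H3 R1.
Qed.

Lemma run_split s l1 tr l2 s' : run s (l1 ++ tr :: l2) s' ->
  exists s1 s2, [/\ run s l1 s1, step s1 tr s2 & run s2 l2 s'].
Proof.
move/run_app => [s1 [R1 R2]]; inversion R2; subst.
by exists s1, s'0; split.
Qed.

Lemma step_sC_change s tr s' t i : step s tr s' -> ~~ sC s t i -> sC s' t i ->
  tr = @TCommit D Reg t i \/ exists k a, tr = TCommitSt Reg t i k a.
Proof.
case=> {s tr s'} /=; try by (move=> *; match goal with H : is_true (~~ ?x), H' : is_true ?x |- _ => by rewrite H' in H end).
- move=> s0 t0 i0 _ _ H1 H2; move: H2; rewrite /upd2; case: andP => [[/eqP E1 /eqP E2]|_] H2.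
  + by left; subst.
  + by rewrite H2 in H1.
- move=> s0 t0 i0 k a _ _ _ _ _ _ H1 H2; move: H2; rewrite /upd2; case: andP => [[/eqP E1 /eqP E2]|_] H2.
  + by right; exists k, a; subst.
  + by rewrite H2 in H1.
Qed.

Lemma run_commit s l s' t i : run s l s' -> ~~ sC s t i -> sC s' t i ->
  exists l1 tr l2 s1 s2, [/\ l = l1 ++ tr :: l2, run s l1 s1, step s1 tr s2, run s2 l2 s' &
    ~~ sC s1 t i /\ (tr = @TCommit D Reg t i \/ exists k a, tr = TCommitSt Reg t i k a)].
Proof.
elim=> [s0 H1 H2|s0 tr s1 l0 s2 S R IH H1 H2]; first by rewrite H2 in H1.
case E: (sC s1 t i).
- exists [::], tr, l0, s0, s1; split => //; first by constructor.
  split => //; exact: step_sC_change S H1 E.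
- have [l1 [tr' [l2 [sa [sb [El R1 S' R2 [Hn Hc]]]]]]] := IH (negbT E) H2.
  exists (tr :: l1), tr', l2, sa, sb; split => //; first by rewrite El.
  exact: run_cons S R1.
Qed.

Lemma run_events_cat (l1 l2 : seq (trans D Reg)) : run_events (l1 ++ l2) = run_events l1 ++ run_events l2.
Proof. by rewrite /run_events map_cat flatten_cat. Qed.

Lemma run_events_cons (tr : trans D Reg) l : run_events (tr :: l) = events_of tr ++ run_events l.
Proof. by []. Qed.

Lemma cat_split T (a b c d : seq T) x : a ++ b = c ++ x :: d ->
  (exists q, a = c ++ x :: q /\ d = q ++ b) \/ (exists c', c = a ++ c' /\ b = c' ++ x :: d).
Proof.
elim: a c => [|y a IH] c /=; first by move=> ->; right; exists c.
case: c => [|z c] /=.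
- by case=> <- <-; left; exists a.
- case=> -> /IH [[q [-> ->]]|[c' [-> ->]]]; [left; exists q | right; exists c']; by [].
Qed.

Lemma ev_split (trs : seq (trans D Reg)) s1 x s2 : run_events trs = s1 ++ x :: s2 ->
  exists tr1 tr tr2 p q, [/\ trs = tr1 ++ tr :: tr2, events_of tr = p ++ x :: q,
    s1 = run_events tr1 ++ p & s2 = q ++ run_events tr2].
Proof.
elim: trs s1 => [|tr trs IH] s1; first by case: s1.
rewrite run_events_cons => H; case: (cat_split H) => [[q [E1 E2]]|[c' [E1 E2]]].
- by exists [::], tr, trs, s1, q; split.
- have [tr1 [tr' [tr2 [p [q [F1 F2 F3 F4]]]]]] := IH _ E2.
  exists (tr :: tr1), tr', tr2, p, q; split => //; first by rewrite F1.
  by rewrite E1 F3 run_events_cons catA.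
Qed.

Lemma In_run_events x (l : seq (trans D Reg)) : List.In x (run_events l) ->
  exists l1 tr l2, l = l1 ++ tr :: l2 /\ List.In x (events_of tr).
Proof.
elim: l => [|tr l IH] //=; rewrite run_events_cons => H0.
case: (List.in_app_or _ _ _ H0) => [H|/IH [l1 [tr' [l2 [E H]]]]].
- by exists [::], tr, l.
- by exists (tr :: l1), tr', l2; rewrite E.
Qed.

Lemma In_run_events2 x l1 tr (l2 : seq (trans D Reg)) : List.In x (events_of tr) ->
  List.In x (run_events (l1 ++ tr :: l2)).
Proof.
move=> H; rewrite run_events_cat run_events_cons; apply: List.in_or_app; right.
by apply: List.in_or_app; left.
Qed.

End Aux5.


Section Aux6.
Variables (D : finType) (zero : D) (Reg : finType) (P : program D Reg).
Local Notation state := (state D Reg).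
Local Notation step := (step zero P).
Local Notation run := (run zero P).
Local Notation Inv := (@Inv D zero Reg).
Local Notation addr := (addr zero).

Lemma cmd_some_size (s : state) t i : cmd_at s t i <> None -> 0 < i <= size (sF s t).
Proof. by case E: (cmd_at s t i) => [c|] // _; exact: cmd_at_size E. Qed.

Lemma ext_cmd_back (s s' : state) t i : ext s s' -> i <= size (sF s t) -> cmd_at s' t i = cmd_at s t i.
Proof. by move=> [A _] /A []. Qed.

Lemma addr_pres (s s' : state) t i a : ext s s' -> addr s t i (Some a) -> addr s' t i (Some a).
Proof.
move=> X; rewrite /addr; case E: (cmd_at s t i) => [c|] //.
rewrite (ext_cmd X E); have /andP[_ Hi] := cmd_at_size E.
by case: c E => // [r e|e e'] E H; apply: ext_exprv X _ _ _ _ H _ _.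
Qed.

Lemma addr_fun (s : state) t i w1 w2 : addr s t i w1 -> addr s t i w2 -> w1 = w2.
Proof.
rewrite /addr; case: (cmd_at s t i) => [[r e|e e'|r e|e]|] H1 H2; try by case: H1.
all: exact: (exprv_fun_uniq H1 H2).
Qed.

Lemma addr_total (s : state) t i : Inv s -> is_store (cmd_at s t i) -> exists w, addr s t i w.
Proof.
move=> [I1 _ _]; rewrite /addr; case: (cmd_at s t i) => [[r e|e e'|r e|e]|] // _.
exact: exprv_total I1 t i e.
Qed.

Lemma inv_early (s s' : state) t i i' a : step s (TEarly Reg t i i' a) s' ->
  [/\ is_load (cmd_at s t i), addr s t i (Some a), 0 < i' < i, is_store (cmd_at s t i') &
     addr s t i' (Some a)] /\
  [/\ ~~ sC s t i', (forall j, i' < j < i -> is_store (cmd_at s t j) -> ~ (addr s t j None \/ addr s t j (Some a))) &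
     s' = set_L s (upd2 (sL s) t i (Some (St D t i')))].
Proof. by move=> S; inversion S; subst. Qed.

Lemma inv_loadmem (s s' : state) t i a : step s (TLoadMem Reg t i a) s' ->
  [/\ is_load (cmd_at s t i), addr s t i (Some a) & s' = set_L s (upd2 (sL s) t i (Some (sprop s t a)))].
Proof. by move=> S; inversion S; subst. Qed.

Lemma inv_commitst (s s' : state) t i k a : step s (TCommitSt Reg t i k a) s' ->
  [/\ is_store (cmd_at s t i), can_commit zero s t i, addr s t i (Some a), (co_of s (sprop s t a) < k)%R &
   s' = set_prop (set_co (set_C s (upd2 (sC s) t i true)) (upd2 (sco s) t i (Some k)))
                (updP (sprop s) t a (St D t i))].
Proof. by move=> S; inversion S; subst. Qed.

Lemma inv_commit (s s' : state) t i : step s (@TCommit D Reg t i) s' -> ~~ is_store (cmd_at s t i).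
Proof. by move=> S; inversion S; subst. Qed.

Lemma can_commit_store (s : state) t i ea ev : can_commit zero s t i -> cmd_at s t i = Some (CStore ea ev) ->
  exists a, addr s t i (Some a) /\ earlier_same_addr_committed zero s t i a.
Proof.
move=> [_ _ _]; rewrite /addr => + E; rewrite E => [[_ [_ [a [v [H1 _ H2]]]]]].
by exists a; split.
Qed.

Lemma ev_load (tr : trans D Reg) p q t i a : events_of tr = p ++ EvLoad Reg t i a :: q ->
  q = [::] /\ (tr = TLoadMem Reg t i a \/ exists i'', tr = TEarly Reg t i i'' a).
Proof.
case: tr => /= [t0 ins|t0 i0 a0|t0 i0 i1 a0|t0 i0|t0 i0 k0 a0|t0 t1 i0 a0];
  case: p => [|x [|y p]] /= E; inversion E; subst; try by case: p {E} H1.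
all: try by (split => //; left).
all: try by (split => //; right; eexists).
all: by case: p {E} H2.
Qed.

Lemma ev_commit (tr : trans D Reg) p q t i k a : events_of tr = p ++ EvCommitSt Reg t i k a :: q ->
  tr = TCommitSt Reg t i k a /\ q = [:: EvProp Reg t t i a].
Proof.
case: tr => /= [t0 ins|t0 i0 a0|t0 i0 i1 a0|t0 i0|t0 i0 k0 a0|t0 t1 i0 a0];
  case: p => [|x [|y p]] /= E; inversion E; subst; try by case: p {E} H1.
all: try by [].
all: by case: p {E} H2.
Qed.

Lemma In_commitst (tr : trans D Reg) t j k a : List.In (EvCommitSt Reg t j k a) (events_of tr) ->
  tr = TCommitSt Reg t j k a.
Proof.
case: tr => /= [t0 ins|t0 i0 a0|t0 i0 i1 a0|t0 i0|t0 i0 k0 a0|t0 t1 i0 a0]; intuition congruence.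
Qed.

End Aux6.


Lemma cmd_pres (D : finType) (Reg : finType) (s s' : state D Reg) t i :
  ext s s' -> cmd_at s t i <> None -> cmd_at s' t i = cmd_at s t i.
Proof. by move=> X /cmd_some_size /andP[_ H]; exact: ext_cmd_back X H. Qed.

Ltac upd_simpl := cbv [co_of set_prop set_co set_C set_L set_F updP upd2 upd1 sprop sco sC sL sF];
  rewrite ?eqxx ?andbT; cbv iota beta; rewrite ?eqxx.

Theorem lemma4 (D : finType) (zero : D) (Reg : finType) (P : program D Reg)
  (sigma : seq (event D Reg)) (trs : seq (trans D Reg)) (sf : state D Reg)
  (t i i' : nat) :
  run zero P (init_state D Reg) trs sf -> final zero sf ->
  sigma = run_events trs ->
  ((exists a tr1 tr2, trs = tr1 ++ TEarly Reg t i i' a :: tr2) <->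
   (exists a k sigma1 sigma2 sigma3,
      [/\ (0 < i' <= i.-1)%N,
          sigma = sigma1 ++ EvLoad Reg t i a :: sigma2 ++ EvCommitSt Reg t i' k a :: sigma3 &
          forall j k', (i' < j < i)%N -> ~ List.In (EvCommitSt Reg t j k' a) sigma3])).
Proof.
move=> R F Es.
have I0 : Inv zero (init_state D Reg) := @Inv_init D zero Reg.
have [Fa Fb Fc] := F.
split.
- move=> [a [tr1 [tr2 Etr]]].
  rewrite Etr in R.
  have [s1 [s2 [R1 S R2]]] := run_split R.
  have I1 := run_Inv I0 R1; have I2 := step_Inv I1 S.
  have [[Hld Hai Hii Hst Hai'] [HnC _ Es2]] := inv_early S.
  have X12 := step_ext S; have X2f := run_ext R2; have X1f := ext_trans X12 X2f.
  have HnC2 : ~~ sC s2 t i' by rewrite Es2.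
  case Ec: (cmd_at s1 t i') => [c|]; last by rewrite Ec in Hst.
  have HC : sC sf t i' by apply: Fa; exact: cmd_at_size (ext_cmd X1f Ec).
  have [l1 [trc [l2 [sa [sb [El Ra Sc Rb [HnCa Htrc]]]]]]] := run_commit R2 HnC2 HC.
  have X2a := run_ext Ra; have X1a := ext_trans X12 X2a.
  case: Htrc => [Etc|[k [a0 Etc]]]; subst trc.
  + by have := inv_commit Sc; rewrite (ext_cmd X1a Ec) -Ec Hst.
  + have [Hsta Hcca Haa Hlta Esb] := inv_commitst Sc.
    have Ea : a0 = a by have := addr_fun Haa (addr_pres X1a Hai'); case.
    subst a0.
    exists a, k, (run_events tr1), (run_events l1), (EvProp Reg t t i' a :: run_events l2).
    split.
    * clear -Hii; lia.
    * by rewrite Es Etr El !run_events_cat !run_events_cons /= run_events_cat run_events_cons.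
    * move=> j k' Hj [Eh|Hin]; first by [].
      have [m1 [tr [m2 [Em Htr]]]] := In_run_events Hin.
      have Etr' := In_commitst Htr; subst tr.
      have Ib := step_Inv (run_Inv I2 Ra) Sc.
      have Xbf := run_ext Rb.
      rewrite Em in Rb.
      have [sc [sd [Rc Sd Rd]]] := run_split Rb.
      have [Hstc _ Hac Hltc Esd] := inv_commitst Sd.
      have Hk : co_of sb (sprop sb t a) = k by rewrite Esb; upd_simpl.
      have Hmono := run_prop_mono t a Ib Rc.
      have Hkk : (k < k')%R by rewrite -Hk; exact: le_lt_trans Hmono Hltc.
      have Xcf := ext_trans (step_ext Sd) (run_ext Rd).
      have Hscof : sco sf t j = Some k'.
        apply: run_sco (step_Inv (run_Inv Ib Rc) Sd) Rd _; by rewrite Esd; upd_simpl.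
      have Hsco' : sco sf t i' = Some k.
        apply: run_sco Ib Rb _; by rewrite Esb; upd_simpl.
      have HL : sL sf t i = Some (St D t i').
        apply: (proj2 X2f); by rewrite Es2; upd_simpl.
      have Hjs : is_store (cmd_at sf t j).
        by rewrite (cmd_pres Xcf) //; move: Hstc; case: (cmd_at sc t j).
      have Hil : is_load (cmd_at sf t i).
        by rewrite (cmd_pres X1f) //; move: Hld; case: (cmd_at s1 t i).
      have := Fc t j i a k' (St D t i') (proj2 (andP Hj)) Hjs Hil (addr_pres Xcf Hac) (addr_pres X1f Hai) Hscof HL.
      rewrite /co_of Hsco' => H.
      by have := lt_le_trans Hkk H; rewrite ltxx.
- move=> [a [k [sig1 [sig2 [sig3 [Hii Esig Hcond]]]]]].
  have E0 : run_events trs = sig1 ++ EvLoad Reg t i a :: (sig2 ++ EvCommitSt Reg t i' k a :: sig3).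
    by rewrite -Es Esig.
  have [tr1 [tr [tr2 [p [q [Etr Eev Esig1 Erest]]]]]] := ev_split E0.
  have [Eq Htr] := ev_load Eev; subst q.
  rewrite /= in Erest.
  have [tr3 [trc [tr4 [p' [q' [Etr2 Eevc _ Esig3]]]]]] := ev_split (esym Erest).
  have [Etrc Eq'] := ev_commit Eevc; subst trc q'.
  rewrite Etr in R; have [s1 [s2 [R1 S R2]]] := run_split R.
  have X2f := run_ext R2.
  have R2' := R2; rewrite Etr2 in R2'; have [s3 [s4 [R3 Sc R4]]] := run_split R2'.
  have I1 := run_Inv I0 R1; have I2 := step_Inv I1 S.
  have I3 := run_Inv I2 R3; have I4 := step_Inv I3 Sc.
  have [Hst3 Hcc3 Ha3 Hlt3 Es4] := inv_commitst Sc.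
  have Hii' : i' < i by clear -Hii; lia.
  have X12 := step_ext S; have X23 := run_ext R3; have X34 := step_ext Sc; have X4f := run_ext R4.
  have X13 := ext_trans X12 X23; have X3f := ext_trans X34 X4f; have X1f := ext_trans X12 X2f.
  have Hsco4f : sco sf t i' = Some k.
    apply: run_sco I4 R4 _; by rewrite Es4; upd_simpl.
  have Hst3f : is_store (cmd_at sf t i').
    by rewrite (cmd_pres X3f) //; move: Hst3; case: (cmd_at s3 t i').
  case: Htr => [Etr0|[i'' Etr0]]; subst tr.
  + exfalso.
    have [Hld Hai Es2] := inv_loadmem S.
    have Hok : src_ok s1 (sprop s1 t a) := Inv_prop_ok t a I1.
    have HL : sL sf t i = Some (sprop s1 t a).
      apply: (proj2 X2f); by rewrite Es2; upd_simpl.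
    have Hco : co_of sf (sprop s1 t a) = co_of s1 (sprop s1 t a) := run_co_of I1 (run_cons S R2) Hok.
    have Hm1 := step_prop_mono t a I1 S.
    have Hm2 := run_prop_mono t a I2 R3.
    have Hil : is_load (cmd_at sf t i).
      by rewrite (cmd_pres X1f) //; move: Hld; case: (cmd_at s1 t i).
    have := Fc t i' i a k _ Hii' Hst3f Hil (addr_pres X3f Ha3) (addr_pres X1f Hai) Hsco4f HL.
    rewrite Hco => H.
    by have := le_lt_trans (le_trans H (le_trans Hm1 Hm2)) Hlt3; rewrite ltxx.
  + have [[Hld Hai Hii2 Hst2 Hai2] [HnC2 Hmax Es2]] := inv_early S.
    suff Ei : i'' = i' by subst i''; exists a, tr1, tr2.
    have Hisz : i <= size (sF s1 t).
      by move: Hld; case E: (cmd_at s1 t i) => [c|] // _; have /andP[_ ->] := cmd_at_size E.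
    have Hcmd3 : cmd_at s3 t i' = cmd_at s1 t i' := ext_cmd_back X13 (leq_trans (ltnW Hii') Hisz).
    have Hst1' : is_store (cmd_at s1 t i') by rewrite -Hcmd3.
    case: (ltngtP i'' i') => // Hlt.
    * exfalso.
      apply: (Hmax i'); [by rewrite Hlt Hii' | exact: Hst1' | ].
      have [w Hw] := addr_total I1 Hst1'; case: w Hw => [b|] Hw; last by left.
      by right; have := addr_fun (addr_pres X13 Hw) Ha3; case=> <-.
    * exfalso.
      move: Hst2; case Ec: (cmd_at s1 t i'') => [[r e|ea ev|r e|e]|] // _.
      have HCf : sC sf t i'' by apply: Fa; exact: cmd_at_size (ext_cmd X1f Ec).
      case HC4: (sC s4 t i'').
      -- have HC3 : sC s3 t i''.
           move: HC4; rewrite Es4; cbv [set_prop set_co set_C sC upd2]; case: andP => [[_ /eqP E]|_ //].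
           by move: Hlt; rewrite E ltnn.
         have HnC2' : ~~ sC s2 t i'' by rewrite Es2.
         have [m1 [trc2 [m2 [sa [sb [Em Ra Sa Rb [HnCa Htrc2]]]]]]] := run_commit R3 HnC2' HC3.
         have X1a := ext_trans X12 (run_ext Ra).
         have Hca := ext_cmd X1a Ec.
         case: Htrc2 => [E2|[k2 [a2 E2]]]; subst trc2.
         ++ by have := inv_commit Sa; rewrite Hca.
         ++ have [_ Hcca _ _ _] := inv_commitst Sa.
            have [a3 [Ha3' Hearly]] := can_commit_store Hcca Hca.
            have Ea3 : a3 = a by have := addr_fun Ha3' (addr_pres X1a Hai2); case.
            subst a3.
            have HnCa' : ~~ sC sa t i'.
              apply/negP => H; have := can_commit_nC Hcc3.
              by rewrite (run_sC Rb (step_sC Sa H)).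
            have Xa3 := ext_trans (step_ext Sa) (run_ext Rb).
            have Hsz : i' <= size (sF sa t).
              have /andP[_ H] := cmd_at_size Hca; exact: leq_trans (ltnW Hlt) H.
            have Hcmda : cmd_at s3 t i' = cmd_at sa t i' := ext_cmd_back Xa3 Hsz.
            have Hsta : is_store (cmd_at sa t i') by rewrite -Hcmda.
            have [w Hw] := addr_total (run_Inv I2 Ra) Hsta.
            have : sC sa t i'.
              apply: Hearly; first by case/andP: Hii => -> _; rewrite Hlt.
              case: w Hw => [b|] Hw; last by left.
              by right; have := addr_fun (addr_pres Xa3 Hw) Ha3; case=> <-.
            by rewrite (negbTE HnCa').
      -- have [m1 [trc2 [m2 [sa [sb [Em Ra Sa Rb [HnCa Htrc2]]]]]]] := run_commit R4 (negbT HC4) HCf.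
         have X1a := ext_trans (ext_trans X13 X34) (run_ext Ra).
         have Hca := ext_cmd X1a Ec.
         case: Htrc2 => [E2|[k2 [a2 E2]]]; subst trc2.
         ++ by have := inv_commit Sa; rewrite Hca.
         ++ have [_ _ Haa _ _] := inv_commitst Sa.
            have Ea2 : a2 = a by have := addr_fun Haa (addr_pres X1a Hai2); case.
            subst a2.
            apply: (Hcond i'' k2); first by rewrite Hlt; case/andP: Hii2 => _ ->.
            rewrite Esig3 Em /=; right; apply: In_run_events2; by left.
Qed.
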